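(* Let $\theta>0$ and $1\le p,q<\infty$, and let $p'$ be the conjugate exponent of $p$ ($\frac1p+\frac1{p'}=1$). If $g\in l^{q),\theta}(L^p)$ and $f\in l^{q)',\theta}(L^{p'})$, then $gf\in L^1(\mathbb R)$ and $$\int_{\mathbb R}|g(x)f(x)|\,dx\le\|g\|_{p,q),\theta}\,\|f\|_{p',q)',\theta}.$$
   Context: Here the index set is $\mathbb Z$ and $I_k=[k,k+1)$, so functions are defined on $\mathbb R=\bigcup_{k\in\mathbb Z}I_k$. The space $l^{q),\theta}(L^p)$ consists of complex-valued measurable $g$ on $\mathbb R$ with $g\chi_{I_k}\in L^p$ for all $k$ and $\|g\|_{p,q),\theta}:=\sup_{\varepsilon>0}\Big(\varepsilon^{\theta}\sum_{k\in\mathbb Z}\big(\int_{I_k}|g|^p\big)^{\frac{q(1+\varepsilon)}{p}}\Big)^{\frac{1}{q(1+\varepsilon)}}<\infty$. The small Lebesgue sequence space $l^{q)',\theta}$ consists of sequences $y=\{y_k\}_{k\in\mathbb Z}$ with $$\|y\|_{l^{q)',\theta}}:=\inf\Big\{\sum_{j\in\mathbb Z}\inf_{\varepsilon>0}\varepsilon^{\frac{-\theta}{q(1+\varepsilon)}}\Big(\sum_{k\in\mathbb Z}y_{k,j}^{(q(1+\varepsilon))'}\Big)^{\frac{1}{(q(1+\varepsilon))'}}\Big\}<\infty,$$ the outer infimum over all decompositions $|y_k|=\sum_{j\in\mathbb Z}y_{k,j}$ with $y_{k,j}\ge0$, and $(q(1+\varepsilon))'$ the conjugate exponent of $q(1+\varepsilon)$.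 For $1\le r\le\infty$, the auxiliary space $l^{q)',\theta}(L^{r})$ consists of complex-valued measurable $f$ on $\mathbb R$ with $f\chi_{I_k}\in L^{r}$ for all $k$ and $\|f\|_{r,q)',\theta}:=\big\|\{\|f\chi_{I_k}\|_{L^{r}}\}_{k\in\mathbb Z}\big\|_{l^{q)',\theta}}<\infty$ (with $L^\infty$ when $p=1$, $p'=\infty$). *)

(* Defs.v *)
From HB Require Import structures.
From mathcomp Require Import all_boot all_order all_algebra.
From mathcomp Require Import all_classical all_reals all_analysis.
From mathcomp Require Import complex.
Set Implicit Arguments. Unset Strict Implicit. Unset Printing Implicit Defensive.
Import Order.TTheory GRing.Theory Num.Theory.
Import numFieldNormedType.Exports.
Local Open Scope classical_set_scope.
Local Open Scope ring_scope.

Notation leb := (@completed_lebesgue_measure _).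

Definition cabs (R : realType) (z : R[i]) : R := Normc.normc z.

(* R with the sigma-algebra of Lebesgue-measurable sets *)
Definition LebR (R : realType) :=
  caratheodory_type ((@wlength R idfun)^*)%mu.

Definition cmeasurable (R : realType) (g : R -> R[i]) : Prop :=
  measurable_fun [set: LebR R] (fun x : LebR R => complex.Re (g x)) /\
  measurable_fun [set: LebR R] (fun x : LebR R => complex.Im (g x)).

Definition lebL (R : realType) : {measure set (LebR R) -> \bar R} :=
  @completed_lebesgue_measure R.

Definition Ik (R : realType) (k : int) : set R :=
  [set x : R | k%:~R <= x < k%:~R + 1].

(* ||g chi_{I_k}||_{L^r}, for r : \bar R (r = +oo gives the ess sup) *)
Definition blocknorm (R : realType) (r : \bar R) (g : R -> R[i]) (k : int)
  : \bar R :=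
  Lnorm (lebL R) r (fun x : LebR R => ((\1_(Ik k) x : R) * cabs (g x))%:E).

Definition conjR (R : realType) (r : R) : R := r / (r - 1).

Definition conj_exp (R : realType) (p : R) : \bar R :=
  if p == 1 then +oo%E else (conjR p)%:E.

Local Open Scope ereal_scope.

Definition grand_norm (R : realType) (theta p q : R) (g : R -> R[i]) : \bar R :=
  ereal_sup [set ((eps `^ theta)%:E *
                  \esum_(k in [set: int]) (blocknorm p%:E g k `^ (q * (1 + eps))))
                 `^ (q * (1 + eps))^-1
            | eps in [set eps : R | (0 < eps)%R]].

Definition small_inner (R : realType) (theta q : R) (z : int -> R) : \bar R :=
  ereal_inf [set ((eps `^ (- theta / (q * (1 + eps))))%:E *
                  (\esum_(k in [set: int]) ((z k `^ conjR (q * (1 + eps)))%:E))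
                   `^ (conjR (q * (1 + eps)))^-1)
            | eps in [set eps : R | (0 < eps)%R]].

Definition small_decomp (R : realType) (y : int -> R) : set (int -> int -> R) :=
  [set D | (forall k j, (0 <= D k j)%R) /\
           (forall k, \esum_(j in [set: int]) (D k j)%:E = `|y k|%:E)].

Definition small_norm (R : realType) (theta q : R) (y : int -> R) : \bar R :=
  ereal_inf [set \esum_(j in [set: int]) small_inner theta q (fun k => D k j)
            | D in small_decomp y].

Definition small_Lnorm (R : realType) (theta q : R) (r : \bar R)
  (f : R -> R[i]) : \bar R :=
  small_norm theta q (fun k => fine (blocknorm r f k)).

Definition in_grand (R : realType) (theta p q : R) (g : R -> R[i]) : Prop :=
  [/\ cmeasurable g, (forall k, blocknorm p%:E g k < +oo)
    & grand_norm theta p q g < +oo].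

Definition in_small (R : realType) (theta q : R) (r : \bar R) (f : R -> R[i])
  : Prop :=
  [/\ cmeasurable f, (forall k, blocknorm r f k < +oo)
    & small_Lnorm theta q r f < +oo].

(* Main.v *)
Require Import Defs.
From HB Require Import structures.
From mathcomp Require Import all_boot all_order all_algebra.
From mathcomp Require Import all_classical all_reals all_analysis.
From mathcomp Require Import complex.
From mathcomp Require Import measurable_realfun lebesgue_integral.
From mathcomp Require Import ring lra.
From mathcomp Require Import ess_sup_inf.
Import Order.TTheory GRing.Theory Num.Theory.
Import numFieldNormedType.Exports.
Local Open Scope classical_set_scope.
Local Open Scope ring_scope.

Local Open Scope ereal_scope.

Definition enat (n : nat) : int := if odd n then Negz n./2 else Posz n./2.

Lemma enat_inj : injective enat.
Proof.
move=> m n; rewrite /enat.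
case om: (odd m); case on: (odd n) => //= -[] h;
  by rewrite -(odd_double_half m) -(odd_double_half n) om on h.
Qed.

Lemma enat_surj (k : int) : exists n, enat n = k.
Proof.
case: k => m.
- exists m.*2; by rewrite /enat odd_double doubleK.
- exists m.*2.+1; rewrite /enat /= odd_double /=; congr Negz; exact: uphalf_double.
Qed.

Lemma enat_image : [set enat x | x in (fun x : nat => xpredT x)] = [set: int].
Proof.
apply/seteqP; split => // k _; have [n <-] := enat_surj k; by exists n.
Qed.

Lemma esum_int (R : realType) (a : int -> \bar R) : (forall k, 0 <= a k) ->
  \esum_(k in [set: int]) a k = \sum_(n <oo) a (enat n).
Proof.
move=> a0; rewrite -enat_image esum_pred_image //.
by move=> m n _ _; apply: enat_inj.
Qed.

Lemma esumZl_int (R : realType) (c : R) (a : int -> \bar R) : (0 <= c)%R ->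
  (forall k, 0 <= a k) ->
  \esum_(k in [set: int]) (c%:E * a k) = c%:E * \esum_(k in [set: int]) a k.
Proof.
move=> c0 a0; rewrite !esum_int //; last by move=> k; apply: mule_ge0.
by rewrite nneseriesZl.
Qed.

Lemma esum_swap_int (R : realType) (a : int -> int -> \bar R) :
  (forall i j, 0 <= a i j) ->
  \esum_(i in [set: int]) \esum_(j in [set: int]) a i j =
  \esum_(j in [set: int]) \esum_(i in [set: int]) a i j.
Proof.
move=> a0.
rewrite esum_int; last by move=> k; apply: esum_ge0 => j _.
rewrite [RHS]esum_int; last by move=> k; apply: esum_ge0 => j _.
under eq_eseriesr do rewrite esum_int //.
under [RHS]eq_eseriesr do rewrite esum_int //.
exact: nneseries_interchange.
Qed.

Section Leb.
Variable R : realType.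
Local Open Scope ring_scope.

Lemma borel_leb (A : set R) : measurable A -> measurable (A : set (LebR R)).
Proof. move=> mA. exact: sub_caratheodory. Qed.

Lemma mIk k : measurable (Ik k : set (LebR R)).
Proof.
apply: borel_leb.
have -> : Ik k = [set` `[(k%:~R : R), k%:~R + 1[].
  by rewrite predeqE => x /=; rewrite in_itv.
exact: measurable_itv.
Qed.

Lemma Ik_floor (x : R) k : Ik k x -> k = Num.floor x.
Proof. by move=> /= h; apply/esym/floor_def; rewrite intrD. Qed.

Lemma int_split (h : LebR R -> \bar R) : measurable_fun [set: LebR R] h ->
  (forall x, 0 <= h x)%E ->
  (\int[lebL R]_(x in [set: LebR R]) h x =
  \esum_(k in [set: int]) \int[lebL R]_(x in (Ik k : set (LebR R))) h x)%E.
Proof.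
move=> mh h0; rewrite esum_int; last by move=> k; apply: integral_ge0.
have U : \bigcup_n (Ik (enat n) : set (LebR R)) = [set: LebR R].
  apply/seteqP; split => // x _.
  have [n en] := enat_surj (Num.floor (x : R)).
  exists n => //; rewrite en /=; have := floor_itv (x : R); rewrite intrD.
  done.
rewrite -U ge0_integral_bigcup //.
- by move=> k; apply: mIk.
- by rewrite U.
- move=> i j _ _ [x [/Ik_floor hi /Ik_floor hj]].
  by apply: enat_inj; rewrite hi hj.
Qed.
End Leb.

Section Meas.
Variable R : realType.
Local Open Scope ring_scope.

Lemma cabsE (z : R[i]) : cabs z = Num.sqrt (complex.Re z ^+ 2 + complex.Im z ^+ 2).
Proof. by case: z. Qed.

Lemma mcabs (g : R -> R[i]) : cmeasurable g ->
  measurable_fun [set: LebR R] (fun x : LebR R => cabs (g x)).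
Proof.
move=> [mr mi].
rewrite (_ : (fun x => _) = Num.sqrt \o (fun x : LebR R => complex.Re (g x) ^+ 2 + complex.Im (g x) ^+ 2)); last first.
  by apply/funext => x; rewrite /= cabsE.
apply: measurableT_comp; first exact: continuous_measurable_fun (@sqrt_continuous R).
by apply: measurable_funD; apply: measurable_funX.
Qed.

Lemma cmeasurableM (g f : R -> R[i]) : cmeasurable g -> cmeasurable f ->
  cmeasurable (fun x => g x * f x).
Proof.
move=> [gr gi] [fr fi]; split.
- rewrite (_ : (fun x => _) = (fun x : LebR R => complex.Re (g x) * complex.Re (f x) - complex.Im (g x) * complex.Im (f x))); last first.
    by apply/funext => x; case: (g x) => a b; case: (f x) => c d.
  by apply: measurable_funB; apply: measurable_funM.
- rewrite (_ : (fun x => _) = (fun x : LebR R => complex.Re (g x) * complex.Im (f x) + complex.Im (g x) * complex.Re (f x))); last first.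
    by apply/funext => x; case: (g x) => a b; case: (f x) => c d.
  by apply: measurable_funD; apply: measurable_funM.
Qed.

Lemma cabsM (z w : R[i]) : cabs (z * w) = cabs z * cabs w.
Proof. exact: Normc.normcM. Qed.

Lemma cabs_ge0 (z : R[i]) : 0 <= cabs z.
Proof. by rewrite cabsE sqrtr_ge0. Qed.
End Meas.

Section Block.
Variable R : realType.
Local Open Scope ring_scope.

Lemma lebLE (A : set R) : lebL R A = lebesgue_measure A.
Proof. reflexivity. Qed.

Lemma lebT : (0 < lebL R [set: LebR R])%E.
Proof.
apply: (@lt_le_trans _ _ (lebL R (Ik 0))).
  rewrite lebLE (_ : Ik 0 = [set` `[(0:R), 1[]).
    by rewrite lebesgue_measure_itv /= lte_fin ltr01 /= sube0 lte01.
  by rewrite predeqE => x; rewrite /Ik /= in_itv /= add0r.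
by apply: le_measure; rewrite ?inE //; apply: mIk.
Qed.

Definition blk (g : R -> R[i]) k (x : LebR R) : R := \1_(Ik k) x * cabs (g x).

Lemma mblk g k : cmeasurable g -> measurable_fun [set: LebR R] (blk g k).
Proof. by move=> mg; apply: measurable_funM; [apply: measurable_indic; apply: mIk | apply: mcabs]. Qed.

Lemma blk_ge0 g k x : 0 <= blk g k x.
Proof. by rewrite /blk mulr_ge0 // ?cabs_ge0 // indicE. Qed.

Lemma int_blk (g f : R -> R[i]) k :
  (\int[lebL R]_(x in (Ik k : set (LebR R))) (cabs (g x * f x))%:E =
   \int[lebL R]_x ((blk g k x * blk f k x)%:E))%E.
Proof.
rewrite integral_mkcond; apply: eq_integral => x _.
rewrite patchE /blk !indicE; case: (x \in _) => /=.
  by rewrite !mul1r cabsM.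
by rewrite !mul0r.
Qed.

Lemma block_hoelder (g f : R -> R[i]) (p : R) k :
  cmeasurable g -> cmeasurable f -> 1 <= p ->
  (blocknorm (conj_exp p) f k < +oo)%E ->
  (\int[lebL R]_(x in (Ik k : set (LebR R))) (cabs (g x * f x))%:E <=
   blocknorm p%:E g k * blocknorm (conj_exp p) f k)%E.
Proof.
move=> mg mf p1 fin; rewrite int_blk.
have [p1e|pn1] := eqVneq p 1.
- rewrite p1e /conj_exp eqxx in fin *.
  set M := blocknorm +oo%E f k in fin *.
  have M0 : (0 <= M)%E by apply: Lnorm_ge0.
  have hM : \forall x \ae lebL R, ((blk f k x)%:E <= M)%E.
    rewrite /M /blocknorm Lnorm.unlock /= lebT.
    have := ess_sup_ge (lebL R) (abse \o (fun x : LebR R => (blk f k x)%:E)).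
    apply: filterS => x /=.
    by rewrite ger0_norm // blk_ge0.
  have Mfin : M \is a fin_num.
    by rewrite ge0_fin_numE.
  have MfE : M = (fine M)%:E by rewrite fineK.
  rewrite MfE in hM *.
  have -> : (blocknorm 1%:E g k = \int[lebL R]_x (blk g k x)%:E)%E.
    rewrite /blocknorm Lnorm1; apply: eq_integral => x _.
    by rewrite /= ger0_norm // blk_ge0.
  rewrite -ge0_integralZr //; last 3 first.
  - by apply/measurable_EFinP; apply: mblk.
  - by move=> x _; rewrite lee_fin blk_ge0.
  - by rewrite lee_fin fine_ge0.
  apply: ae_ge0_le_integral => //.
  + by move=> x _; rewrite lee_fin mulr_ge0 // blk_ge0.
  + by apply/measurable_EFinP; apply: measurable_funM; apply: mblk.
  + by move=> x _; rewrite mule_ge0 // ?lee_fin ?blk_ge0 ?fine_ge0.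
  + apply: emeasurable_funM => //; by apply/measurable_EFinP; apply: mblk.
  + apply: filterS hM => x hx _.
    rewrite EFinM muleC [X in (_ <= X)%E]muleC.
    by apply: lee_wpmul2r => //; rewrite lee_fin blk_ge0.
- have p1' : 1 < p by rewrite lt_neqAle eq_sym pn1.
  have p0 : 0 < p by apply: lt_trans p1'.
  have cE : conj_exp p = (conjR p)%:E by rewrite /conj_exp (negbTE pn1).
  rewrite cE /blocknorm.
  have c0 : 0 < conjR p by rewrite /conjR divr_gt0 // subr_gt0.
  have := hoelder (lebL R) (mblk g k mg) (mblk f k mf) p0 c0.
  have -> : p^-1 + (conjR p)^-1 = 1.
    rewrite /conjR invf_div; field; rewrite gt_eqF //.
  move=> /(_ erefl); apply: le_trans.
  rewrite Lnorm1 le_eqVlt; apply/orP; left; apply/eqP; apply: eq_integral => x _.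
  by rewrite /= ger0_norm // mulr_ge0 // blk_ge0.
Qed.
End Block.

Section Disc.
Variable R : realType.
Local Open Scope ring_scope.

Lemma disc_hoelder (theta q eps : R) (a : int -> \bar R) (z : int -> R) (G : \bar R) :
  0 < theta -> 1 <= q -> 0 < eps ->
  (forall k, 0 <= a k)%E -> (forall k, a k < +oo)%E -> (forall k, 0 <= z k) ->
  (((eps `^ theta)%:E * \esum_(k in [set: int]) (a k `^ (q * (1 + eps))))
     `^ (q * (1 + eps))^-1 <= G)%E ->
  (\esum_(k in [set: int]) (a k * (z k)%:E) <=
   G * ((eps `^ (- theta / (q * (1 + eps))))%:E *
        (\esum_(k in [set: int]) ((z k `^ conjR (q * (1 + eps)))%:E))
          `^ (conjR (q * (1 + eps)))^-1))%E.
Proof.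
move=> th0 q1 e0 a0 afin z0 hG.
set s := q * (1 + eps) in hG *.
have s1 : 1 < s.
  rewrite /s; apply: (@le_lt_trans _ _ q) => //.
  by rewrite ltr_pMr ?ltrDl // (lt_le_trans ltr01).
have s0 : 0 < s by apply: lt_trans s1.
have c0 : 0 < conjR s by rewrite /conjR divr_gt0 // subr_gt0.
have sc : s^-1 + (conjR s)^-1 = 1.
  by rewrite /conjR invf_div; field; rewrite gt_eqF.
pose A n := fine (a (enat n)).
pose Z n := z (enat n).
have aE n : a (enat n) = (A n)%:E by rewrite /A fineK // ge0_fin_numE.
have A0 n : 0 <= A n by rewrite /A fine_ge0.
have mA : measurable_fun [set: nat] A by [].
have mZ : measurable_fun [set: nat] Z by [].
have H := hoelder counting mA mZ s0 c0 sc.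
rewrite !Lnorm_counting // in H.
have E1 : ((\sum_(k <oo) `|(EFin \o (A \* Z)%R) k| `^ 1) `^ 1^-1 =
    \esum_(k in [set: int]) (a k * (z k)%:E))%E.
  rewrite invr1 poweRe1; last by apply: nneseries_ge0 => n *; exact: poweR_ge0.
  rewrite esum_int; last by move=> k; rewrite mule_ge0 // lee_fin.
  apply: eq_eseriesr => n _.
  have AZ0 : 0 <= A n * Z n by apply: mulr_ge0; [exact: A0 | exact: z0].
  by rewrite /= ger0_norm // powRr1 // EFinM -aE.
have E2 : (\sum_(k <oo) `|(EFin \o A) k| `^ s =
    \esum_(k in [set: int]) (a k `^ s))%E.
  rewrite esum_int; last by move=> k; apply: poweR_ge0.
  by apply: eq_eseriesr => n _; rewrite /= ger0_norm // aE poweR_EFin.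
have E3 : (\sum_(k <oo) `|(EFin \o Z) k| `^ conjR s =
    \esum_(k in [set: int]) ((z k `^ conjR s)%:E))%E.
  rewrite esum_int; last by move=> k; rewrite lee_fin powR_ge0.
  by apply: eq_eseriesr => n _; rewrite /= ger0_norm //; apply: z0.
rewrite E1 E2 E3 in H.
apply: (le_trans H).
set X := ((\esum_(k in [set: int]) (a k `^ s)) `^ s^-1)%E in H *.
set B := ((\esum_(k in [set: int]) ((z k `^ conjR s)%:E)) `^ (conjR s)^-1)%E in H *.
set d := eps `^ (theta * s^-1).
have d0 : 0 < d by apply: powR_gt0.
have cE : eps `^ (- theta / s) = d^-1 by rewrite mulNr powRN.
rewrite cE muleA (muleC G).
apply: lee_wpmul2r; first by apply: poweR_ge0.
rewrite lee_pdivlMl //.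
move: hG; rewrite poweRM; last 2 first.
- by rewrite lee_fin powR_ge0.
- by apply: esum_ge0 => k _; apply: poweR_ge0.
by rewrite poweR_EFin -powRrM.
Qed.
End Disc.

Section Main.
Variable R : realType.
Local Open Scope ring_scope.

Lemma Linf (L G : \bar R) (S : set (\bar R)) : (0 <= G)%E -> (G < +oo)%E ->
  (exists x, S x) -> (forall x, S x -> L <= G * x)%E -> (L <= G * ereal_inf S)%E.
Proof.
move=> G0 Gfin [x0 Sx0] h.
have GE : G = (fine G)%:E by rewrite fineK // ge0_fin_numE.
rewrite GE in h *.
have g0 : 0 <= fine G by rewrite fine_ge0.
have [gz|gp] := eqVneq (fine G) 0.
  by have := h _ Sx0; rewrite gz !mul0e.
have gpos : 0 < fine G by rewrite lt_neqAle eq_sym gp g0.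
rewrite -lee_pdivrMl //; apply/ereal_infP => y Sy.
by rewrite lee_pdivrMl //; apply: h.
Qed.

Lemma small_inner_ge0 (theta q : R) (z : int -> R) : (0 <= small_inner theta q z)%E.
Proof.
apply/ereal_infP => _ [eps _ <-].
by rewrite mule_ge0 // ?lee_fin ?powR_ge0 // poweR_ge0.
Qed.

Lemma small_norm_ge0 (theta q : R) (y : int -> R) : (0 <= small_norm theta q y)%E.
Proof.
apply/ereal_infP => _ [D _ <-].
by apply: esum_ge0 => j _; apply: small_inner_ge0.
Qed.

Lemma grand_norm_ge0 (theta p q : R) (g : R -> R[i]) :
  (0 <= grand_norm theta p q g)%E.
Proof.
have ge_sup (S : set (\bar R)) : (exists x, S x /\ (0 <= x)%E) -> (0 <= ereal_sup S)%E.
  by move=> [x [Sx x0]]; apply: le_trans x0 (ereal_sup_ubound Sx).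
apply: ge_sup; eexists; split; first (exists 1; [exact: ltr01 | reflexivity]).
exact: poweR_ge0.
Qed.

Lemma decomp_nonempty (y : int -> R) : exists D, small_decomp y D.
Proof.
exists (fun k j => if j \in [set (0:int)] then `|y k| else 0); split.
  by move=> k j; case: ifP.
move=> k.
rewrite (_ : \esum_(j in [set: int]) _ =
   \esum_(j in [set: int]) if j \in [set (0:int)] then `|y k|%:E else 0%E).
  by rewrite -esum_mkcond esum_set1 // lee_fin.
by apply: eq_esum => j _; case: ifP.
Qed.

Lemma key (theta p q : R) (g f : R -> R[i]) :
  0 < theta -> 1 <= p -> 1 <= q ->
  in_grand theta p q g -> in_small theta q (conj_exp p) f ->
  (\int[lebL R]_(x in [set: LebR R]) (cabs (g x * f x))%:E
       <= grand_norm theta p q g * small_Lnorm theta q (conj_exp p) f)%E.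
Proof.
move=> th0 p1 q1 [mg gfin Gfin] [mf ffin Nfin].
set G := grand_norm theta p q g in Gfin *.
have G0 : (0 <= G)%E by apply: grand_norm_ge0.
have mgf := @cmeasurableM R g f mg mf.
rewrite int_split; last 2 first.
- by apply/measurable_EFinP; apply: mcabs.
- by move=> x; rewrite lee_fin cabs_ge0.
set a := fun k => blocknorm p%:E g k.
set b := fun k => fine (blocknorm (conj_exp p) f k).
have a0 k : (0 <= a k)%E by apply: Lnorm_ge0.
have b0 k : 0 <= b k by apply: fine_ge0; apply: Lnorm_ge0.
apply: (@le_trans _ _ (\esum_(k in [set: int]) (a k * (b k)%:E))%E).
  apply: le_esum => k _.
  rewrite /b fineK; first exact: block_hoelder.
  by rewrite ge0_fin_numE // Lnorm_ge0.
rewrite /small_Lnorm /small_norm -/b.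
apply: Linf => //.
  by have [D hD] := decomp_nonempty b; exists (\esum_(j in [set: int]) small_inner theta q (fun k => D k j)); exists D.
move=> _ [D [D0 Dsum] <-].
have aE k : a k = (fine (a k))%:E by rewrite fineK // ge0_fin_numE.
rewrite (_ : \esum_(k in [set: int]) (a k * (b k)%:E) =
   \esum_(k in [set: int]) \esum_(j in [set: int]) (a k * (D k j)%:E))%E; last first.
  apply: eq_esum => k _.
  rewrite -(ger0_norm (b0 k)) -Dsum aE esumZl_int //; first exact: fine_ge0.
  by move=> j; rewrite lee_fin.
rewrite esum_swap_int; last by move=> i j; rewrite mule_ge0 // lee_fin.
have GE : G = (fine G)%:E by rewrite fineK // ge0_fin_numE.
rewrite GE -esumZl_int; last 2 first.
- by rewrite fine_ge0.
- by move=> j; apply: small_inner_ge0.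
apply: le_esum => j _.
rewrite -GE; apply: Linf => //.
  by eexists; exists 1; [exact: ltr01 | reflexivity].
move=> _ [eps eps0 <-].
apply: disc_hoelder => //.
by apply: ereal_sup_ubound; exists eps.
Qed.
End Main.

Local Close Scope ereal_scope.
Theorem theorem3p8 (R : realType) (theta p q : R) (g f : R -> R[i]) :
  0 < theta -> 1 <= p -> 1 <= q ->
  in_grand theta p q g ->
  in_small theta q (conj_exp p) f ->
  [/\ cmeasurable (fun x => g x * f x),
      (lebL R).-integrable [set: LebR R]
         (fun x : LebR R => (cabs (g x * f x))%:E)
    & (\int[lebL R]_(x in [set: LebR R]) (cabs (g x * f x))%:E
       <= grand_norm theta p q g * small_Lnorm theta q (conj_exp p) f)%E].
Proof.
move=> th0 p1 q1 hg hf.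
have K := @key R theta p q g f th0 p1 q1 hg hf.
case: hg => [mg _ Gfin]; case: hf => [mf _ Nfin].
have mgf := @cmeasurableM R g f mg mf.
split => //.
apply/integrableP; split.
  by apply/measurable_EFinP; apply: mcabs.
under eq_integral do rewrite gee0_abs ?lee_fin ?cabs_ge0 //.
apply: le_lt_trans K _.
have G0 := @grand_norm_ge0 R theta p q g.
have N0 := @small_norm_ge0 R theta q (fun k => fine (blocknorm (conj_exp p) f k)).
rewrite -(@fineK _ (grand_norm theta p q g)); last by rewrite ge0_fin_numE.
rewrite -(@fineK _ (small_Lnorm theta q (conj_exp p) f)); last by rewrite ge0_fin_numE.
by rewrite -EFinM ltry.
Qed.
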